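(* There exists a hypothesis class $\mathcal H$ of VC dimension $1$ such that every protocol that learns $\mathcal H$ in the agnostic case with error parameter $\epsilon$ has sample complexity at least $\tilde\Omega(1/\epsilon)$.
   Context: Communication model: Let $\mathcal X$ be a domain and $\mathcal Z=\mathcal X\times\{\pm1\}$ the set of examples. A sample is a finite sequence of examples. Alice receives a sample $S_a$ and Bob a sample $S_b$; the joint sample $S=(S_a,S_b)$ is their concatenation, arbitrarily split. A deterministic protocol proceeds by messages, each either a single example from the sender's own input sample or a single bit, depending only on the sender's input and previous messages; output is determined by the messages. Each example or bit costs one unit; sample complexity is the maximal number of units transmitted. $L_S(h)=\frac{1}{|S|}\sum_{(x,y)\in S}1[h(x)\ne y]$. A protocol learns $\mathcal H$ in the agnostic case with error $\epsilon$ if for every input sample $S$ (no realizability assumption) it outputs a hypothesis $h:\mathcal X\to\{\pm1\}$ (not necessarily in $\mathcal H$) with $L_S(h)\le\min_{f\in\mathcal H}L_S(f)+\epsilon$. $\tilde\Omega$ denotes a lower bound up to logarithmic factors. *)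

(* Defs.v *)
From Stdlib Require Import Reals List.
Import ListNotations.
Open Scope R_scope.

(* Labels {+1,-1} are encoded as bool: true = +1, false = -1. *)
Definition example (X : Type) : Type := (X * bool)%type.
Definition sample (X : Type) : Type := list (example X).
Definition hypothesis (X : Type) : Type := X -> bool.

Definition emp_loss {X : Type} (s : sample X) (h : hypothesis X) : R :=
  INR (length (filter (fun z => negb (Bool.eqb (h (fst z)) (snd z))) s))
  / INR (length s).

Definition shatters {X : Type} (H : hypothesis X -> Prop) (A : list X) : Prop :=
  forall f : X -> bool, exists h, H h /\ forall x, In x A -> h x = f x.

Definition VC_dim_eq {X : Type} (H : hypothesis X -> Prop) (d : nat) : Prop :=
  (exists A : list X, NoDup A /\ length A = d /\ shatters H A) /\
  (forall A : list X, NoDup A -> shatters H A -> (length A <= d)%nat).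

Inductive party := Alice | Bob.

Inductive message (X : Type) : Type :=
| MEx : example X -> message X
| MBit : bool -> message X.
Arguments MEx {X}.
Arguments MBit {X}.

Record protocol (X : Type) : Type := Protocol {
  (* who speaks next (None = the protocol has halted), a function of the
     messages sent so far *)
  next_speaker : list (message X) -> option party;
  alice_msg : sample X -> list (message X) -> message X;
  bob_msg : sample X -> list (message X) -> message X;
  output : list (message X) -> hypothesis X }.
Arguments next_speaker {X}.
Arguments alice_msg {X}.
Arguments bob_msg {X}.
Arguments output {X}.

Definition msg_from {X : Type} (s : sample X) (m : message X) : Prop :=
  match m with MEx z => In z s | MBit _ => True end.

Definition valid_protocol {X : Type} (P : protocol X) : Prop :=
  forall (s : sample X) (t : list (message X)),
    msg_from s (alice_msg P s t) /\ msg_from s (bob_msg P s t).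

Fixpoint transcript_upto {X : Type} (P : protocol X) (sa sb : sample X)
  (n : nat) : list (message X) :=
  match n with
  | O => []
  | Datatypes.S n' =>
      let t := transcript_upto P sa sb n' in
      match next_speaker P t with
      | None => t
      | Some Alice => t ++ [alice_msg P sa t]
      | Some Bob => t ++ [bob_msg P sb t]
      end
  end.

Definition halts_with {X : Type} (P : protocol X) (sa sb : sample X)
  (t : list (message X)) : Prop :=
  exists n, transcript_upto P sa sb n = t /\ next_speaker P t = None.

Definition learns_agnostic {X : Type} (H : hypothesis X -> Prop) (eps : R)
  (P : protocol X) : Prop :=
  forall sa sb : sample X, exists t, halts_with P sa sb t /\
    forall f, H f -> emp_loss (sa ++ sb) (output P t) <= emp_loss (sa ++ sb) f + eps.

(* sample complexity of P is at least B: some input makes P transmit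
   at least B units (each example or bit = one message = one unit) *)
Definition sample_complexity_ge {X : Type} (P : protocol X) (B : R) : Prop :=
  exists (sa sb : sample X) (t : list (message X)),
    halts_with P sa sb t /\ B <= INR (length t).

(* Main.v *)
Require Import Defs.
From Stdlib Require Import Reals.
From Stdlib Require Import List Lia Lra ZArith ClassicalEpsilon.
Import ListNotations.
Open Scope R_scope.

Section Trans.
Context {X : Type} (P : protocol X).

Lemma T_S a b k : transcript_upto P a b (S k) =
  match next_speaker P (transcript_upto P a b k) with
  | None => transcript_upto P a b k
  | Some Alice => transcript_upto P a b k ++ [alice_msg P a (transcript_upto P a b k)]
  | Some Bob => transcript_upto P a b k ++ [bob_msg P b (transcript_upto P a b k)]
  end.
Proof. reflexivity. Qed.

Lemma T_len a b k : (length (transcript_upto P a b k) <= k)%nat.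
Proof.
  induction k; [simpl; lia|]. rewrite T_S.
  destruct (next_speaker P _) as [[|]|]; rewrite ?length_app; simpl; lia.
Qed.

Lemma T_prefix a b k d : exists r, transcript_upto P a b (k + d) = transcript_upto P a b k ++ r.
Proof.
  induction d.
  - exists []. rewrite Nat.add_0_r, app_nil_r. reflexivity.
  - destruct IHd as [r Hr]. rewrite Nat.add_succ_r, T_S, Hr.
    destruct (next_speaker P _) as [[|]|].
    + exists (r ++ [alice_msg P a (transcript_upto P a b k ++ r)]). now rewrite app_assoc.
    + exists (r ++ [bob_msg P b (transcript_upto P a b k ++ r)]). now rewrite app_assoc.
    + exists r. reflexivity.
Qed.

Lemma T_stay a b k d : next_speaker P (transcript_upto P a b k) = None ->
  transcript_upto P a b (k + d) = transcript_upto P a b k.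
Proof.
  intro H. induction d.
  - now rewrite Nat.add_0_r.
  - rewrite Nat.add_succ_r, T_S, IHd, H. reflexivity.
Qed.

Lemma T_alt a b k : length (transcript_upto P a b k) = k \/
  next_speaker P (transcript_upto P a b k) = None.
Proof.
  induction k; [left; reflexivity|].
  rewrite T_S. destruct (next_speaker P _) as [[|]|] eqn:E.
  - left. rewrite length_app. simpl. destruct IHk as [h|h]; [lia|congruence].
  - left. rewrite length_app. simpl. destruct IHk as [h|h]; [lia|congruence].
  - right. exact E.
Qed.

Lemma T_firstn a b k d : transcript_upto P a b k = firstn k (transcript_upto P a b (k + d)).
Proof.
  destruct (T_prefix a b k d) as [r Hr]. destruct (T_alt a b k) as [Hl|Hn].
  - rewrite Hr, firstn_app. rewrite firstn_all2 by lia.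
    replace (k - length (transcript_upto P a b k))%nat with 0%nat by lia.
    simpl. now rewrite app_nil_r.
  - rewrite T_stay by exact Hn. symmetry. apply firstn_all2. apply T_len.
Qed.

Lemma T_halt a b t : halts_with P a b t -> forall k, transcript_upto P a b k = firstn k t.
Proof.
  intros [N [HN Hn]] k. destruct (le_lt_dec k N) as [h|h].
  - replace N with (k + (N - k))%nat in HN by lia. rewrite <- HN. apply T_firstn.
  - replace k with (N + (k - N))%nat by lia. rewrite T_stay by (rewrite HN; exact Hn).
    rewrite HN. symmetry. apply firstn_all2. rewrite <- HN. pose proof (T_len a b N). lia.
Qed.

Lemma halt_len a b t : halts_with P a b t -> exists N, (length t <= N)%nat /\ transcript_upto P a b N = t.
Proof. intros [N [HN _]]. exists N. split; [rewrite <- HN; apply T_len | exact HN]. Qed.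

Lemma halt_unique a b t1 t2 : halts_with P a b t1 -> halts_with P a b t2 -> t1 = t2.
Proof.
  intros H1 H2. destruct (halt_len _ _ _ H1) as [N1 [L1 _]].
  destruct (halt_len _ _ _ H2) as [N2 [L2 _]].
  pose proof (T_halt _ _ _ H1 (N1 + N2)) as E1. pose proof (T_halt _ _ _ H2 (N1 + N2)) as E2.
  rewrite firstn_all2 in E1 by lia. rewrite firstn_all2 in E2 by lia. congruence.
Qed.

Lemma rect a b a' b' t : halts_with P a b t -> halts_with P a' b' t -> halts_with P a b' t.
Proof.
  intros H1 H2.
  assert (Hs : forall k, transcript_upto P a b k = transcript_upto P a' b' k).
  { intro k. rewrite (T_halt _ _ _ H1), (T_halt _ _ _ H2). reflexivity. }
  assert (Hk : forall k, transcript_upto P a b' k = transcript_upto P a b k).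
  { induction k; [reflexivity|].
    pose proof (Hs (S k)) as E. rewrite !T_S in E. rewrite !T_S, IHk.
    rewrite <- (Hs k) in E.
    destruct (next_speaker P _) as [[|]|]; try reflexivity.
    apply app_inj_tail in E. destruct E as [_ E]. rewrite E. reflexivity. }
  destruct H1 as [N [HN Hn]]. exists N. split; [rewrite Hk; exact HN | exact Hn].
Qed.

Lemma T_msgs a b k m : In m (transcript_upto P a b k) ->
  (exists u, m = alice_msg P a u) \/ (exists u, m = bob_msg P b u).
Proof.
  induction k; [simpl; tauto|]. rewrite T_S.
  destruct (next_speaker P _) as [[|]|]; intro H; try (apply in_app_or in H; destruct H as [H|H]);
    auto; simpl in H; destruct H as [H|[]]; eauto.
Qed.

End Trans.

Fixpoint sam (f : nat -> bool) (n : nat) : sample nat :=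
  match n with O => [] | S n' => (n', f n') :: sam f n' end.

Definition errp (h : hypothesis nat) := fun z : example nat => negb (Bool.eqb (h (fst z)) (snd z)).
Definition bad (h : hypothesis nat) f n := length (filter (errp h) (sam f n)).

Lemma bad_S h f n : bad h f (S n) = ((if Bool.eqb (h n) (f n) then 0 else 1) + bad h f n)%nat.
Proof. unfold bad. simpl. unfold errp at 1. simpl. destruct (Bool.eqb (h n) (f n)); reflexivity. Qed.

Lemma bad_compl h f n : (bad h f n + bad h (fun i => negb (f i)) n = n)%nat.
Proof. induction n; [reflexivity|]. rewrite !bad_S. destruct (h n), (f n); simpl; lia. Qed.

Lemma sam_length f n : length (sam f n) = n.
Proof. induction n; simpl; auto. Qed.

Lemma sam_in f n z : In z (sam f n) -> (fst z < n)%nat.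
Proof. induction n; simpl; [tauto|]. intros [<-|H]; simpl; [lia|]. specialize (IHn H); lia. Qed.

Lemma emp_loss_eq f g n h : emp_loss (sam f n ++ sam g n) h = INR (bad h f n + bad h g n) / INR (n + n).
Proof. unfold emp_loss, bad. rewrite filter_app, !length_app, !sam_length. reflexivity. Qed.

Lemma special (f1 f2 : nat -> bool) j n : f1 j <> f2 j ->
  (bad (fun x => andb (Nat.eqb x j) (f1 j)) f1 n + bad (fun x => andb (Nat.eqb x j) (f1 j)) (fun i => negb (f2 i)) n
   + bad (fun x => andb (Nat.eqb x j) (f2 j)) f2 n + bad (fun x => andb (Nat.eqb x j) (f2 j)) (fun i => negb (f1 i)) n
   + (if Nat.ltb j n then 2 else 0) <= n + n)%nat.
Proof.
  intro Hne. induction n; [simpl; lia|]. rewrite !bad_S. cbv beta.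
  destruct (Nat.eqb_spec n j) as [e|e].
  - subst n. simpl andb.
    destruct (Nat.ltb_spec j j); [lia|]. destruct (Nat.ltb_spec j (S j)); [|lia].
    destruct (f1 j), (f2 j); simpl in *; try congruence; lia.
  - simpl andb. destruct (Nat.ltb_spec j n), (Nat.ltb_spec j (S n)); try lia;
    destruct (f1 n), (f2 n); simpl; lia.
Qed.

Definition Hcls : hypothesis nat -> Prop :=
  fun f => exists a b, f = (fun x => andb (Nat.eqb x a) b).

Lemma vc1 : VC_dim_eq Hcls 1.
Proof.
  split.
  - exists [0%nat]. split; [constructor; [simpl; tauto|constructor]|split; [reflexivity|]].
    intro f. exists (fun x => andb (Nat.eqb x 0) (f 0%nat)). split.
    + exists 0%nat, (f 0%nat). reflexivity.
    + intros x [<-|[]]. reflexivity.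
  - intros A HA Hs. destruct A as [|x [|y r]]; simpl; try lia.
    destruct (Hs (fun _ => true)) as [h [[a [b ->]] Hh]].
    pose proof (Hh x (or_introl eq_refl)) as E1. pose proof (Hh y (or_intror (or_introl eq_refl))) as E2.
    apply andb_prop in E1. apply andb_prop in E2.
    destruct E1 as [E1 _], E2 as [E2 _]. apply Nat.eqb_eq in E1, E2. subst.
    inversion HA. simpl in *. tauto.
Qed.

Fixpoint bvecs n : list (list bool) :=
  match n with O => [[]] | S n => map (cons true) (bvecs n) ++ map (cons false) (bvecs n) end.

Lemma bvecs_len n : length (bvecs n) = (2 ^ n)%nat.
Proof. induction n; simpl; auto. rewrite length_app, !length_map. lia. Qed.

Lemma bvecs_in n A : In A (bvecs n) -> length A = n.
Proof.
  revert A; induction n; simpl; intros A H.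
  - destruct H as [<-|[]]; reflexivity.
  - apply in_app_or in H. destruct H as [H|H]; apply in_map_iff in H; destruct H as [B [<- HB]];
    simpl; f_equal; auto.
Qed.

Lemma NoDup_map_on {A B} (f : A -> B) l :
  (forall x y, In x l -> In y l -> f x = f y -> x = y) -> NoDup l -> NoDup (map f l).
Proof.
  induction l as [|a l IH]; intros Hi Hn; simpl; [constructor|].
  inversion Hn; subst. constructor.
  - intro H. apply in_map_iff in H. destruct H as [y [Hy Hyl]].
    assert (y = a) by (apply Hi; simpl; auto). subst. contradiction.
  - apply IH; auto. intros; apply Hi; simpl; auto.
Qed.

Lemma bvecs_nodup n : NoDup (bvecs n).
Proof.
  induction n; simpl; [repeat constructor; simpl; tauto|].
  apply NoDup_app.
  - apply NoDup_map_on; auto. intros x y _ _ H; inversion H; auto.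
  - apply NoDup_map_on; auto. intros x y _ _ H; inversion H; auto.
  - intros a H1 H2. apply in_map_iff in H1, H2. destruct H1 as [? [<- _]]. destruct H2 as [? [H _]].
    discriminate.
Qed.

Fixpoint words {A} (s : list A) m : list (list A) :=
  match m with O => [[]] | S m => [] :: flat_map (fun a => map (cons a) (words s m)) s end.

Lemma fm_len {A} (s : list A) (W : list (list A)) :
  length (flat_map (fun a => map (cons a) W) s) = (length s * length W)%nat.
Proof. induction s; simpl; auto. rewrite length_app, length_map, IHs. lia. Qed.

Lemma words_len {A} (s : list A) m : (length (words s m) <= (length s + 1) ^ m)%nat.
Proof.
  induction m; simpl; [lia|]. rewrite fm_len.
  assert (1 <= (length s + 1) ^ m)%nat by (apply Nat.neq_0_lt_0, Nat.pow_nonzero; lia).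
  nia.
Qed.

Lemma words_in {A} (s : list A) m l : (length l <= m)%nat -> (forall x, In x l -> In x s) -> In l (words s m).
Proof.
  revert l; induction m; intros l Hl Hs; destruct l as [|a l]; simpl in *; auto; try lia.
  right. apply in_flat_map. exists a. split; [apply Hs; auto|].
  apply in_map. apply IHm; [lia|]. intros; apply Hs; auto.
Qed.

Fixpoint msgs n : list (message nat) :=
  match n with O => [MBit true; MBit false] | S n => MEx (n, true) :: MEx (n, false) :: msgs n end.

Lemma msgs_len n : length (msgs n) = (2 * n + 2)%nat.
Proof. induction n; simpl; auto. rewrite IHn. lia. Qed.

Lemma msgs_bit n b : In (MBit b) (msgs n).
Proof. induction n; simpl; auto. destruct b; auto. Qed.

Lemma msgs_ex n i b : (i < n)%nat -> In (MEx (i, b)) (msgs n).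
Proof.
  induction n; intro H; [lia|]. simpl. destruct (Nat.eq_dec i n) as [->|ne].
  - destruct b; auto.
  - right; right. apply IHn. lia.
Qed.

Lemma msg_in n f m : msg_from (sam f n) m -> In m (msgs n).
Proof.
  destruct m as [[i b]|b]; simpl; intro H; [|apply msgs_bit].
  apply sam_in in H. simpl in H. apply msgs_ex; auto.
Qed.

Lemma trans_in (P : protocol nat) n f g k m : valid_protocol P ->
  In m (transcript_upto P (sam f n) (sam g n) k) -> In m (msgs n).
Proof.
  intros HV H. apply T_msgs in H. destruct H as [[u ->]|[u ->]].
  - apply (msg_in n f). apply HV.
  - apply (msg_in n g). apply HV.
Qed.

Lemma list_argmax {A} (g : A -> nat) l : l <> [] -> exists x, In x l /\ forall y, In y l -> (g y <= g x)%nat.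
Proof.
  induction l as [|a l IH]; intro H; [congruence|].
  destruct l as [|b l'].
  - exists a. split; [simpl; auto|]. intros y [<-|[]]; lia.
  - destruct IH as [x [Hx Hm]]; [discriminate|].
    destruct (le_lt_dec (g a) (g x)).
    + exists x. split; [simpl; auto|]. intros y [<-|Hy]; auto.
    + exists a. split; [simpl; auto|]. intros y [<-|Hy]; auto. specialize (Hm y Hy). lia.
Qed.

Lemma real_to_nat (a b N : nat) (eps : R) : (0 < N)%nat -> INR N * eps < 1 ->
  INR a / INR N <= INR b / INR N + eps -> (a <= b)%nat.
Proof.
  intros HN He H. apply lt_0_INR in HN.
  assert (INR a <= INR b + eps * INR N).
  { apply Rmult_le_compat_r with (r := INR N) in H; [|lra].
    replace (INR a / INR N * INR N) with (INR a) in H by (field; lra).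
    replace ((INR b / INR N + eps) * INR N) with (INR b + eps * INR N) in H by (field; lra).
    exact H. }
  assert (INR a < INR (b + 1)) by (rewrite plus_INR; simpl; lra).
  apply INR_lt in H1. lia.
Qed.

Definition fa (A : list bool) := fun i => nth i A false.
Definition fb (A : list bool) := fun i => negb (nth i A false).

Lemma core (P : protocol nat) (HV : valid_protocol P) (n : nat) (eps : R)
  (Hn : INR (n + n) * eps < 1) (HL : learns_agnostic Hcls eps P) :
  exists A0 t0, halts_with P (sam (fa A0) n) (sam (fb A0) n) t0 /\
    (2 ^ n <= (2 * n + 3) ^ (length t0))%nat.
Proof.
  set (phi := fun A => proj1_sig (constructive_indefinite_description _ (HL (sam (fa A) n) (sam (fb A) n)))).
  assert (Hphi : forall A, halts_with P (sam (fa A) n) (sam (fb A) n) (phi A)).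
  { intro A. unfold phi. exact (proj1 (proj2_sig (constructive_indefinite_description _ (HL (sam (fa A) n) (sam (fb A) n))))). }
  assert (Hacc : forall A A', halts_with P (sam (fa A) n) (sam (fb A') n) (phi A) ->
            forall f, Hcls f -> (bad (output P (phi A)) (fa A) n + bad (output P (phi A)) (fb A') n
                                 <= bad f (fa A) n + bad f (fb A') n)%nat).
  { intros A A' Hh f Hf. destruct (HL (sam (fa A) n) (sam (fb A') n)) as [t1 [Ht1 G]].
    rewrite (halt_unique _ _ _ _ _ Ht1 Hh) in G. specialize (G f Hf).
    rewrite !emp_loss_eq in G.
    destruct n as [|n']; [unfold bad; simpl; lia|].
    eapply real_to_nat; [|exact Hn|exact G]. lia. }
  assert (Hinj : forall A A', In A (bvecs n) -> In A' (bvecs n) -> phi A = phi A' -> A = A').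
  { intros A A' HA HA' E. apply nth_ext with (d := false) (d' := false).
    - rewrite (bvecs_in _ _ HA), (bvecs_in _ _ HA'). reflexivity.
    - intros j Hj. rewrite (bvecs_in _ _ HA) in Hj.
      destruct (Bool.bool_dec (nth j A false) (nth j A' false)) as [e|ne]; [exact e|exfalso].
      assert (H1 : halts_with P (sam (fa A) n) (sam (fb A') n) (phi A)).
      { apply rect with (a' := sam (fa A') n) (b := sam (fb A) n); [apply Hphi|]. rewrite E; apply Hphi. }
      assert (H2 : halts_with P (sam (fa A') n) (sam (fb A) n) (phi A')).
      { apply rect with (a' := sam (fa A) n) (b := sam (fb A') n); [apply Hphi|]. rewrite <- E; apply Hphi. }
      pose proof (Hacc A A' H1 (fun x => andb (Nat.eqb x j) (fa A j))
                    (ex_intro _ j (ex_intro _ (fa A j) eq_refl))) as G1.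
      pose proof (Hacc A' A H2 (fun x => andb (Nat.eqb x j) (fa A' j))
                    (ex_intro _ j (ex_intro _ (fa A' j) eq_refl))) as G2.
      rewrite <- E in G2.
      pose proof (special (fa A) (fa A') j n ne) as S.
      pose proof (bad_compl (output P (phi A)) (fa A) n) as C1.
      pose proof (bad_compl (output P (phi A)) (fa A') n) as C2.
      destruct (Nat.ltb_spec j n); [|lia].
      change (fun i => negb (fa A i)) with (fb A) in *.
      change (fun i => negb (fa A' i)) with (fb A') in *.
      lia. }
  assert (Hne : bvecs n <> []).
  { intro H. pose proof (bvecs_len n) as L. rewrite H in L. simpl in L.
    pose proof (Nat.pow_nonzero 2 n). lia. }
  destruct (list_argmax (fun A => length (phi A)) _ Hne) as [A0 [HA0 Hm]].
  exists A0, (phi A0). split; [apply Hphi|].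
  assert (ND : NoDup (map phi (bvecs n))) by (apply NoDup_map_on; [exact Hinj|apply bvecs_nodup]).
  assert (INC : incl (map phi (bvecs n)) (words (msgs n) (length (phi A0)))).
  { intros t Ht. apply in_map_iff in Ht. destruct Ht as [A [<- HA]].
    apply words_in; [apply Hm; exact HA|].
    intros m Hmm. destruct (Hphi A) as [N [HN _]]. rewrite <- HN in Hmm.
    eapply trans_in; eauto. }
  pose proof (NoDup_incl_length ND INC) as L.
  rewrite length_map, bvecs_len in L.
  pose proof (words_len (msgs n) (length (phi A0))) as W. rewrite msgs_len in W.
  replace (2 * n + 2 + 1)%nat with (2 * n + 3)%nat in W by lia. lia.
Qed.

Lemma pick_n (eps : R) : 0 < eps -> exists n : nat, / (4 * eps) <= INR n <= / (4 * eps) + 1.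
Proof.
  intro He. destruct (archimed (/ (4 * eps))) as [h1 h2].
  assert (0 < / (4 * eps)) by (apply Rinv_0_lt_compat; lra).
  assert (Hz : (0 < up (/ (4 * eps)))%Z) by (apply lt_IZR; simpl; lra).
  exists (Z.to_nat (up (/ (4 * eps)))). rewrite INR_IZR_INZ, Z2Nat.id by lia. lra.
Qed.

Lemma ln_le' x y : 0 < x -> x <= y -> ln x <= ln y.
Proof. intros Hx Hxy. destruct (Rle_lt_or_eq_dec _ _ Hxy) as [h|h]; [left; apply ln_increasing; auto|subst; lra]. Qed.

Theorem theorem3 :
  exists (X : Type) (H : hypothesis X -> Prop),
    VC_dim_eq H 1 /\
    exists (c : R) (k : nat) (eps0 : R),
      0 < c /\ 0 < eps0 < 1 /\
      forall eps : R, 0 < eps < eps0 ->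
      forall P : protocol X, valid_protocol P -> learns_agnostic H eps P ->
        sample_complexity_ge P (c / (eps * (ln (1 / eps)) ^ k)).
Proof.
  exists nat, Hcls. split; [exact vc1|].
  assert (Hl2 : 0 < ln 2) by (rewrite <- ln_1; apply ln_increasing; lra).
  exists (ln 2 / 8), 1%nat, (1/8). split; [lra|]. split; [lra|].
  intros eps [He0 He1] P HV HL.
  destruct (pick_n eps He0) as [n [Hn1 Hn2]].
  set (u := / eps) in *.
  assert (Hu : 8 < u) by (unfold u; apply Rmult_lt_reg_r with eps; [lra|]; rewrite Rinv_l; lra).
  assert (E4 : / (4 * eps) = u / 4) by (unfold u; field; lra).
  rewrite E4 in Hn1, Hn2.
  assert (Hneps : INR (n + n) * eps < 1).
  { rewrite plus_INR.
    assert (INR n * eps <= (u/4 + 1) * eps) by (apply Rmult_le_compat_r; lra).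
    assert ((u / 4 + 1) * eps = / 4 + eps) by (unfold u; field; lra). lra. }
  destruct (core P HV n eps Hneps HL) as [A0 [t0 [Ht0 Hc]]].
  exists (sam (fa A0) n), (sam (fb A0) n), t0. split; [exact Ht0|].
  set (m := length t0) in *.
  apply le_INR in Hc. rewrite !pow_INR in Hc.
  rewrite plus_INR, mult_INR in Hc. simpl (INR 2) in Hc. simpl (INR 3) in Hc.
  set (x := INR n) in *.
  assert (Hx0 : 0 < x) by lra.
  assert (Hp : 0 < 2 ^ n) by (apply pow_lt; lra).
  apply ln_le' in Hc; [|exact Hp]. rewrite !ln_pow in Hc by lra. fold x in Hc.
  set (L := ln (1 / eps)).
  assert (EL : 1 / eps = u) by (unfold u; field; lra).
  assert (HL0 : 0 < L) by (unfold L; rewrite EL, <- ln_1; apply ln_increasing; lra).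
  assert (HL2 : ln (2 * x + 3) <= 2 * L).
  { unfold L. rewrite EL. replace (2 * ln u) with (ln (u ^ 2)) by (rewrite ln_pow by lra; simpl; ring).
    apply ln_le'; [lra|]. simpl. nra. }
  assert (HM : 0 <= INR m) by apply pos_INR.
  assert (Hk : u / 4 * ln 2 <= INR m * (2 * L)).
  { assert (x * ln 2 <= INR m * ln (2 * x + 3)) by (replace 2 with (1+1) by ring; replace 3 with (1+1+1) by ring; exact Hc).
    assert (INR m * ln (2 * x + 3) <= INR m * (2 * L)) by (apply Rmult_le_compat_l; lra).
    assert (u / 4 * ln 2 <= x * ln 2) by (apply Rmult_le_compat_r; lra). lra. }
  replace (ln 2 / 8 / (eps * L ^ 1)) with ((u / 4 * ln 2) / (2 * L)) by (unfold u; field; lra).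
  apply Rmult_le_reg_r with (2 * L); [lra|]. unfold Rdiv. rewrite Rmult_assoc, Rinv_l by lra. lra.
Qed.
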